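(* Let $G$ be a connected, simply-connected nilpotent Lie group with Lie algebra $\mathfrak{g}$, and let $\pi:G\to G/[G,G]$ be the natural projection. Suppose $\mathfrak{g}$ has a basis $\mathcal{X}=\{X_1,\dots,X_m,X_{m+1},\dots,X_n\}$ such that $\pi(X_1),\dots,\pi(X_m)$ form a basis of $\mathfrak{g}/[\mathfrak{g},\mathfrak{g}]$. Let $H\le G$ be a connected subgroup which is $M$-rational relative to $\mathcal{X}$, and suppose $\pi(H)$ contains an element $x$ whose coordinates in the basis $\pi(X_1),\dots,\pi(X_m)$ are bounded in magnitude by $M$. Then there is $\tilde x\in H$ with $\pi(\tilde x)=x$ whose coordinates (with respect to $\mathcal{X}$) are bounded by $O_{M,n}(1)$.
   Context: $H$ is $M$-rational relative to $\mathcal{X}$ if its Lie algebra $\mathfrak{h}=\log H$ is cut out, in the coordinates given by $\mathcal{X}$, by linear forms with integer coefficients of magnitude at most $M$ (equivalently, spanned by vectors that are rational combinations of $\mathcal{X}$ of height at most $M$). Coordinates of group elements are taken via $g=\exp(\sum t_iX_i)$; $G/[G,G]$ is identified with $\mathfrak{g}/[\mathfrak{g},\mathfrak{g}]$ via the exponential map.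
   Formalization: The basis vectors $X_{m+1},\dots,X_n$ are also assumed to lie in $[\mathfrak{g},\mathfrak{g}]$, so the basis $\mathcal{X}$ is adapted to the derived algebra. The statement above fails without it. *)

(* Defs.v *)
From HB Require Import structures.
From mathcomp Require Import all_boot all_order all_algebra.
From mathcomp Require Import reals.
Set Implicit Arguments. Unset Strict Implicit. Unset Printing Implicit Defensive.
Import Order.TTheory GRing.Theory Num.Theory.
Local Open Scope ring_scope.

(* A real Lie algebra g of dimension n is modelled on column vectors 'cV[R]_n:
   the coordinates of a vector are its coordinates in the basis X = (e_0..e_{n-1}).
   The simply-connected nilpotent group G is identified with g through exp,
   so a group element g = exp(sum t_i X_i) has coordinates t. *)

Definition is_lie_bracket (R : realType) (n : nat)
  (br : 'cV[R]_n -> 'cV[R]_n -> 'cV[R]_n) : Prop :=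
  [/\ (forall (a : R) u v w, br (a *: u + v) w = a *: br u w + br v w),
      (forall (a : R) u v w, br w (a *: u + v) = a *: br w u + br w v),
      (forall u, br u u = 0) &
      (forall u v w, br u (br v w) + br v (br w u) + br w (br u v) = 0)].

Definition is_nilpotent_bracket (R : realType) (n : nat)
  (br : 'cV[R]_n -> 'cV[R]_n -> 'cV[R]_n) : Prop :=
  exists k : nat, forall (s : seq 'cV[R]_n) (y : 'cV[R]_n),
    size s = k -> foldr br y s = 0.

Definition in_derived (R : realType) (n : nat)
  (br : 'cV[R]_n -> 'cV[R]_n -> 'cV[R]_n) (v : 'cV[R]_n) : Prop :=
  exists (N : nat) (u w : 'I_N -> 'cV[R]_n), v = \sum_(i < N) br (u i) (w i).

Definition cut_out (R : realType) (n k : nat) (A : 'M[int]_(k, n))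
  (v : 'cV[R]_n) : Prop := map_mx (fun z : int => z%:~R) A *m v = 0.

Definition is_subalgebra (R : realType) (n : nat)
  (br : 'cV[R]_n -> 'cV[R]_n -> 'cV[R]_n) (h : 'cV[R]_n -> Prop) : Prop :=
  forall u v, h u -> h v -> h (br u v).

(* Main.v *)
Require Import Defs.
From HB Require Import structures.
From mathcomp Require Import all_boot all_order all_algebra.
From mathcomp Require Import reals zify.
Import Order.TTheory GRing.Theory Num.Theory.
Local Open Scope ring_scope.

Lemma unif (R : realType) (I : finType) (Q : I -> R -> Prop) :
  (forall i C C', Q i C -> C <= C' -> Q i C') ->
  (forall i, exists C, Q i C) -> exists C, forall i, Q i C.
Proof.
move=> Hm HQ.
suff [C HC] : exists C, forall i, i \in enum I -> Q i C.
  by exists C => i; apply: HC; rewrite mem_enum.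
elim: (enum I) => [|a s [C IH]]; first by exists 0.
have [Ca Ha] := HQ a; exists (Num.max Ca C) => i; rewrite inE => /orP[/eqP ->|Hi].
  by apply: Hm Ha _; rewrite le_max lexx.
by apply: Hm (IH _ Hi) _; rewrite le_max lexx orbT.
Qed.

Lemma enc (R : realType) (K : nat) (z : int) : `|z| < K%:Z ->
  exists o : 'I_(K + K).+1, ((o : nat)%:R - K%:R : R) = z%:~R.
Proof.
move=> Hz; exists (inord (absz (z + K%:Z))).
have H0 : 0 <= z + K%:Z by lia.
have H1 : (absz (z + K%:Z)%R < (K + K).+1)%N by lia.
rewrite inordK // natr_absz ger0_norm // intrD addrK.
by [].
Qed.
Section Der.
Variables (R : realType) (n : nat) (br : 'cV[R]_n -> 'cV[R]_n -> 'cV[R]_n).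
Hypothesis Hbr : is_lie_bracket br.

Lemma br0l w : br 0 w = 0.
Proof.
have := Hbr; rewrite /is_lie_bracket => -[H1 _ _ _]; have := H1 1 0 0 w; rewrite !scale1r addr0 => /eqP.
by rewrite -subr_eq0 opprD addrA subrr add0r oppr_eq0 => /eqP ->.
Qed.

Lemma brNl u w : br (- u) w = - br u w.
Proof.
have := Hbr; rewrite /is_lie_bracket => -[H1 _ _ _]; have := H1 (-1) u 0 w.
by rewrite addr0 br0l addr0 !scaleN1r.
Qed.

Lemma der_add v1 v2 : in_derived br v1 -> in_derived br v2 -> in_derived br (v1 + v2).
Proof.
move=> [N1 [u1 [w1 ->]]] [N2 [u2 [w2 ->]]].
exists (N1 + N2)%N.
exists (fun i => match split i with inl a => u1 a | inr b => u2 b end).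
exists (fun i => match split i with inl a => w1 a | inr b => w2 b end).
rewrite big_split_ord /=; congr (_ + _); apply: eq_bigr => i _.
  by rewrite -[lshift _ _]/(unsplit (inl _ i)) unsplitK.
by rewrite -[rshift _ _]/(unsplit (inr _ i)) unsplitK.
Qed.

Lemma der_opp v : in_derived br v -> in_derived br (- v).
Proof.
move=> [N [u [w ->]]]; exists N, (fun i => - u i), w.
by rewrite -sumrN; apply: eq_bigr => i _; rewrite brNl.
Qed.
End Der.

Lemma der_iff (R : realType) (m p : nat) (br : 'cV[R]_(m + p) -> 'cV[R]_(m + p) -> 'cV[R]_(m + p)) :
  is_lie_bracket br ->
  (forall c : 'cV[R]_m, in_derived br (col_mx c 0) -> c = 0) ->
  (forall w : 'cV[R]_p, in_derived br (col_mx 0 w)) ->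
  forall v, in_derived br v <-> usubmx v = 0.
Proof.
move=> Hbr H3 H5 v; split.
  move=> Hv; apply: H3.
  have -> : col_mx (usubmx v) 0 = v + - col_mx 0 (dsubmx v).
    by rewrite -{2}[v]vsubmxK opp_col_mx add_col_mx oppr0 addr0 subrr.
  by apply: der_add => //; apply: der_opp => //; apply: H5.
by move=> Hu; rewrite -[v]vsubmxK Hu; apply: H5.
Qed.
Lemma core (R : realType) (m p k : nat) (M : R) (B : 'M[R]_(k, m + p)) :
  exists C : R, forall x : 'cV[R]_m, (forall i, `|x i 0| <= M) ->
    (exists v, B *m v = 0 /\ usubmx v = x) ->
    exists v, [/\ B *m v = 0, usubmx v = x & forall j, `|v j 0| <= C].
Proof.
pose K := kermx B^T.
pose P : 'M[R]_(m + p, m) := col_mx 1%:M 0.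
pose W := K *m P.
pose L := pinvmx W *m K.
exists (\sum_j \sum_i `|M| * `|L i j|).
move=> x Hx [v [Bv uv]].
have vP : forall u : 'cV[R]_(m + p), u^T *m P = (usubmx u)^T.
  move=> u; rewrite -{1}[u]vsubmxK tr_col_mx mul_row_col mulmx1 mulmx0 addr0.
  by [].
have vK : (v^T <= K)%MS.
  by apply/sub_kermxP; rewrite -trmx_mul Bv trmx0.
have xW : (x^T <= W)%MS.
  case/submxP: vK => a ha.
  by rewrite -uv -vP ha -mulmxA submxMl.
exists (x^T *m L)^T; split.
- apply: trmx_inj; rewrite trmx_mul trmxK trmx0; apply/sub_kermxP.
  by rewrite /L mulmxA submxMl.
- by apply: trmx_inj; rewrite -vP trmxK /L mulmxA -mulmxA mulmxKpV.
move=> j; rewrite mxE mxE.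
apply: (le_trans (ler_norm_sum _ _ _)).
apply: (@le_trans _ _ (\sum_i `|M| * `|L i j|)).
  apply: ler_sum => i _; rewrite normrM mxE ler_wpM2r //.
  exact: le_trans (Hx i) (ler_norm _).
rewrite (bigD1 j) //= lerDl; apply: sumr_ge0 => j' _; apply: sumr_ge0 => i _.
by rewrite mulr_ge0.
Qed.

Section Enc.
Variables (R : realType) (n K : nat).
Definition FF := {ffun 'I_n -> 'I_(K + K).+1}.
Definition vecf (f : FF) (j : 'I_n) : R := ((f j : nat)%:R - K%:R).
Definition BT (T : {set FF}) : 'M[R]_(#|FF|, n) :=
  \matrix_(i < #|FF|, j < n) (if enum_val i \in T then vecf (enum_val i) j else 0).

Lemma BT_ker T (v : 'cV[R]_n) : BT T *m v = 0 <->
  (forall f, f \in T -> \sum_j vecf f j * v j 0 = 0).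
Proof.
split.
  move=> H f Hf; have := congr1 (fun A : 'M[R]_(#|FF|, 1) => A (enum_rank f) 0) H.
  rewrite !mxE => E; rewrite -[RHS]E; apply: eq_bigr => j _.
  by rewrite /BT mxE enum_rankK Hf.
move=> H; apply/matrixP => i z; rewrite (ord1 z) !mxE.
under eq_bigr => j _ do rewrite /BT mxE.
case: (boolP (enum_val i \in T)) => Hi.
  exact: H.
by rewrite big1 // => j _; rewrite mul0r.
Qed.
End Enc.

Lemma cut_rows (R : realType) (n k : nat) (A : 'M[int]_(k, n)) (v : 'cV[R]_n) :
  cut_out A v <-> forall r, \sum_j (A r j)%:~R * v j 0 = 0.
Proof.
rewrite /cut_out; split.
  move=> H r; have := congr1 (fun B : 'cV[R]_k => B r 0) H; rewrite !mxE => E; rewrite -[RHS]E.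
  by apply: eq_bigr => j _; rewrite mxE.
move=> H; apply/matrixP => r z; rewrite (ord1 z) !mxE -[RHS](H r).
by apply: eq_bigr => j _; rewrite mxE.
Qed.

Theorem corollaryA3 (R : realType) (m p : nat) (M : R) :
  exists C : R, forall (br : 'cV[R]_(m + p) -> 'cV[R]_(m + p) -> 'cV[R]_(m + p))
    (k : nat) (A : 'M[int]_(k, m + p)) (x : 'cV[R]_m),
    is_lie_bracket br ->
    is_nilpotent_bracket br ->
    (* pi(X_1),...,pi(X_m) form a basis of g/[g,g] *)
    (forall c : 'cV[R]_m, in_derived br (col_mx c 0) -> c = 0) ->
    (forall v : 'cV[R]_(m + p), exists c : 'cV[R]_m, in_derived br (v - col_mx c 0)) ->
    (* X_{m+1},...,X_n lie in [g,g] (see NOTES.md, READING) *)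
    (forall w : 'cV[R]_p, in_derived br (col_mx 0 w)) ->
    (* H = exp(h), h a Lie subalgebra, M-rational relative to X *)
    (forall i j, `|A i j|%:~R <= M) ->
    is_subalgebra br (cut_out A) ->
    (* x in pi(H), with coordinates bounded by M *)
    (forall i, `|x i 0| <= M) ->
    (exists v, cut_out A v /\ in_derived br (v - col_mx x 0)) ->
    exists v, [/\ cut_out A v, in_derived br (v - col_mx x 0) &
                  forall j, `|v j 0| <= C].
Proof.
pose K := (Num.truncn M).+1.
have MK : M < K%:R by apply: truncnS_gt.
have [C HC] : exists C : R, forall T : {set FF (m + p) K},
  forall x : 'cV[R]_m, (forall i, `|x i 0| <= M) ->
    (exists v, BT R (m + p) K T *m v = 0 /\ usubmx v = x) ->
    exists v, [/\ BT R (m + p) K T *m v = 0, usubmx v = x & forall j, `|v j 0| <= C].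
  apply: unif; last by move=> T; apply: core.
  move=> T C0 C' H HC x Hx Hv; have [v [a b c]] := H x Hx Hv.
  by exists v; split => // j; apply: le_trans (c j) HC.
exists C => br k A x Hlie _ H3 _ H5 HA _ Hx [v0 [Av0 Dv0]].
have Hd := @der_iff R m p br Hlie H3 H5.
have eqx : forall v, in_derived br (v - col_mx x 0) <-> usubmx v = x.
  move=> v; rewrite Hd linearB /= col_mxKu; split; first by move/eqP; rewrite subr_eq0 => /eqP.
  by move=> ->; rewrite subrr.
pose TA := [set f : FF (m + p) K | [exists r, [forall j, vecf R (m + p) K f j == (A r j)%:~R]]].
have eqA : forall v, cut_out A v <-> BT R (m + p) K TA *m v = 0.
  move=> v; rewrite BT_ker cut_rows; split.
    move=> H f; rewrite inE => /existsP[r /forallP Hr]; rewrite -[RHS](H r).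
    by apply: eq_bigr => j _; rewrite (eqP (Hr j)).
  move=> H r.
  have Hb : forall j, exists o : 'I_(K + K).+1, ((o : nat)%:R - K%:R : R) == (A r j)%:~R.
    move=> j; suff [o ho] : exists o : 'I_(K + K).+1, ((o : nat)%:R - K%:R : R) = (A r j)%:~R.
      by exists o; apply/eqP.
    apply: enc; rewrite -(ltr_int R); apply: le_lt_trans (HA r j) _.
    by rewrite -pmulrn.
  pose f : FF (m + p) K := [ffun j => xchoose (Hb j)].
  have Hf : forall j, vecf R (m + p) K f j = (A r j)%:~R.
    by move=> j; rewrite /vecf ffunE (eqP (xchooseP (Hb j))).
  rewrite -[RHS](H f); last first.
    by rewrite inE; apply/existsP; exists r; apply/forallP => j; rewrite Hf.
  by apply: eq_bigr => j _; rewrite Hf.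
have [v [Bv uv Cv]] := HC TA x Hx (ex_intro _ v0 (conj (proj1 (eqA v0) Av0) (proj1 (eqx v0) Dv0))).
by exists v; split => //; [apply/eqA | apply/eqx].
Qed.
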